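(* Let $M=(S,\mathrm{Act},P)$ be an MDP, $T\subseteq S$, $\mathrm{rew}\colon S\to\mathbb{R}_{\ge0}$. Let $(x,r)\in[0,\infty]^S\times\mathbb{N}_\infty^S$ satisfy: (1) $D^{\min,\mathrm{rew}}_x(r)\le r$; (2) $E^{\min}(x)\le x$; (3) for all $s\in S$, $x(s)<\infty$ implies $r(s)<\infty$ (inequalities pointwise). Then $\mathbb{E}^{\min}_s(\Diamond T)\le x(s)$ for all $s\in S$.
   Context: An MDP is a tuple $M=(S,\mathrm{Act},P)$ with $S$ finite, $\mathrm{Act}$ finite, $P\colon S\times\mathrm{Act}\times S\to[0,1]$ with $\sum_{s'}P(s,a,s')\in\{0,1\}$; $\mathrm{Act}(s)=\{a\mid\sum_{s'}P(s,a,s')=1\}$ is nonempty for all $s$; $\mathrm{Post}(s,a)=\{s'\mid P(s,a,s')>0\}$. A strategy is $\sigma\colon S\to\mathrm{Act}$ with $\sigma(s)\in\mathrm{Act}(s)$, inducing a Markov chain with transitions $P(s,\sigma(s),\cdot)$. For an infinite path $s_0s_1\ldots$, the accumulated reward is $\sum_{k=0}^{n-1}\mathrm{rew}(s_k)$ with $n=\min\{i\mid s_i\in T\}$ if $T$ is visited, and $\infty$ otherwise; $\mathbb{E}^\sigma_s(\Diamond T)$ is its expectation under $\sigma$ from $s$, and $\mathbb{E}^{\min}_s(\Diamond T)=\min_\sigma\mathbb{E}^\sigma_s(\Diamond T)$. $E^{\min}(x)(s)=0$ for $s\in T$ and $\mathrm{rew}(s)+\min_{a\in\mathrm{Act}(s)}\sum_{s'\in\mathrm{Post}(s,a)}P(s,a,s')x(s')$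 for $s\notin T$, with $p\cdot\infty=\infty$ for $p>0$, $a+\infty=\infty$. The $x$-decreasing actions of $s$ are $\mathrm{Act}^{\mathrm{rew}}_x(s)=\{a\in\mathrm{Act}(s)\mid x(s)\ge\mathrm{rew}(s)+\sum_{s'\in\mathrm{Post}(s,a)}P(s,a,s')x(s')\}$. $\mathbb{N}_\infty=\mathbb{N}\cup\{\infty\}$, $1+\infty=\infty$, minimum over the empty set is $\infty$. $D^{\min,\mathrm{rew}}_x(r)(s)=0$ for $s\in T$ and $1+\min_{a\in\mathrm{Act}^{\mathrm{rew}}_x(s)}\min_{s'\in\mathrm{Post}(s,a)}r(s')$ for $s\notin T$. *)

(* Defs.v *)
From mathcomp Require Import all_boot all_order all_algebra.
From mathcomp Require Import all_classical all_reals all_analysis.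
Set Implicit Arguments. Unset Strict Implicit. Unset Printing Implicit Defensive.
Import Order.TTheory GRing.Theory Num.Theory.
Local Open Scope ring_scope.

Section MDP.
Variables (R : realType) (S Act : finType).
Variable P : S -> Act -> S -> R.
Variable T : {set S}.
Variable rew : S -> R.

Definition mdp_wf : Prop :=
  (forall s a s', 0 <= P s a s' <= 1) /\
  (forall s a, \sum_(s' : S) P s a s' = 0 \/ \sum_(s' : S) P s a s' = 1).

Definition enabled (s : S) : pred Act := fun a => \sum_(s' : S) P s a s' == 1.

Definition post (s : S) (a : Act) : pred S := fun s' => 0 < P s a s'.

Definition strategy (sigma : {ffun S -> Act}) : bool :=
  [forall s, enabled s (sigma s)].

(* Finite path p_0 ... p_n (n transitions) that starts in s and visits T
   for the first time at its last state p_n. *)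
Definition first_hit (s : S) (n : nat) (p : {ffun 'I_n.+1 -> S}) : bool :=
  [&& p ord0 == s, p ord_max \in T &
      [forall i : 'I_n, p (widen_ord (leqnSn n) i) \notin T]].

Definition path_prob (sigma : {ffun S -> Act}) (n : nat)
  (p : {ffun 'I_n.+1 -> S}) : R :=
  \prod_(i < n) P (p (widen_ord (leqnSn n) i)) (sigma (p (widen_ord (leqnSn n) i)))
                  (p (lift ord0 i)).

Definition path_rew (n : nat) (p : {ffun 'I_n.+1 -> S}) : R :=
  \sum_(i < n) rew (p (widen_ord (leqnSn n) i)).

Local Open Scope ereal_scope.

(* probability of eventually visiting T from s under sigma
   (sum over the disjoint cylinders of first-hitting paths) *)
Definition reach_prob (sigma : {ffun S -> Act}) (s : S) : \bar R :=
  \sum_(n <oo) (\sum_(p : {ffun 'I_n.+1 -> S} | first_hit s p) (path_prob sigma p))%R%:E.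

(* E^sigma_s(<> T): expectation of the accumulated reward, which is +oo on
   paths never visiting T; hence +oo if T is reached with probability < 1,
   and otherwise the sum over first-hitting paths of probability * reward. *)
Definition exp_rew (sigma : {ffun S -> Act}) (s : S) : \bar R :=
  if reach_prob sigma s < 1 then +oo
  else \sum_(n <oo)
        (\sum_(p : {ffun 'I_n.+1 -> S} | first_hit s p)
            (path_prob sigma p * path_rew p))%R%:E.

Definition exp_rew_min (s : S) : \bar R :=
  \big[mine/+oo]_(sigma : {ffun S -> Act} | strategy sigma) exp_rew sigma s.

Definition post_sum (x : S -> \bar R) (s : S) (a : Act) : \bar R :=
  \sum_(s' | post s a s') (P s a s')%:E * x s'.

Definition Emin (x : S -> \bar R) (s : S) : \bar R :=
  if s \in T then 0
  else (rew s)%:E + \big[mine/+oo]_(a | enabled s a) post_sum x s a.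

Definition dec_act (x : S -> \bar R) (s : S) : pred Act :=
  fun a => enabled s a && ((rew s)%:E + post_sum x s a <= x s).

End MDP.

(* N_oo = N u {oo}: Some n is n, None is oo *)
Definition natinf := option nat.
Definition ninf_le (a b : natinf) : bool :=
  match a, b with
  | _, None => true
  | None, Some _ => false
  | Some m, Some n => (m <= n)%N
  end.
Definition ninf_min (a b : natinf) : natinf :=
  match a, b with
  | None, _ => b
  | _, None => a
  | Some m, Some n => Some (minn m n)
  end.
Definition ninf_succ (a : natinf) : natinf :=
  match a with None => None | Some n => Some n.+1 end.

Definition Dmin (R : realType) (S Act : finType) (P : S -> Act -> S -> R)
  (T : {set S}) (rew : S -> R) (x : S -> \bar R) (r : S -> natinf) (s : S)
  : natinf :=
  if s \in T then Some 0%N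
  else ninf_succ (\big[ninf_min/None]_(a | dec_act P rew x s a)
                   \big[ninf_min/None]_(s' | post P s a s') r s').

(* Main.v *)
Require Import Defs.
From mathcomp Require Import all_boot all_order all_algebra.
From mathcomp Require Import all_classical all_reals all_analysis.
From mathcomp Require Import lra.
Import Order.TTheory GRing.Theory Num.Theory.
Set Implicit Arguments. Unset Strict Implicit. Unset Printing Implicit Defensive.
Local Open Scope ring_scope.

Section Paths.
Variables (R : realType) (S Act : finType) (P : S -> Act -> S -> R).
Variables (T : {set S}) (rew : S -> R) (sigma : {ffun S -> Act}).

Definition fcons n (s0 : S) (q : {ffun 'I_n.+1 -> S}) : {ffun 'I_n.+2 -> S} :=
  [ffun i => if unlift ord0 i is Some j then q j else s0].
Definition ftail n (p : {ffun 'I_n.+2 -> S}) : {ffun 'I_n.+1 -> S} :=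
  [ffun j => p (lift ord0 j)].

Lemma fcons0 n s0 (q : {ffun 'I_n.+1 -> S}) : fcons s0 q ord0 = s0.
Proof. by rewrite ffunE unlift_none. Qed.
Lemma fconsS n s0 (q : {ffun 'I_n.+1 -> S}) j : fcons s0 q (lift ord0 j) = q j.
Proof. by rewrite ffunE liftK. Qed.

Lemma widen0 n : widen_ord (leqnSn n.+1) (ord0 : 'I_n.+1) = ord0.
Proof. exact: val_inj. Qed.
Lemma widenS n (i : 'I_n) :
  widen_ord (leqnSn n.+1) (lift ord0 i) = lift ord0 (widen_ord (leqnSn n) i).
Proof. exact: val_inj. Qed.
Lemma maxS n : (ord_max : 'I_n.+2) = lift ord0 (ord_max : 'I_n.+1).
Proof. exact: val_inj. Qed.

Lemma sum_paths n (F : {ffun 'I_n.+2 -> S} -> R) :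
  \sum_p F p = \sum_s0 \sum_(q : {ffun 'I_n.+1 -> S}) F (fcons s0 q).
Proof.
rewrite pair_big /=.
rewrite (reindex (fun u : S * {ffun 'I_n.+1 -> S} => fcons u.1 u.2)) //.
exists (fun p : {ffun 'I_n.+2 -> S} => (p ord0, ftail p)).
  move=> [s0 q] _ /=; rewrite fcons0; congr pair.
  by apply/ffunP => j; rewrite ffunE fconsS.
move=> p _; apply/ffunP => i; rewrite ffunE.
by case: unliftP => [j ->|->]; rewrite ?ffunE.
Qed.

Lemma first_hit_cons n s s0 (q : {ffun 'I_n.+1 -> S}) :
  first_hit T s (fcons s0 q) = [&& s0 == s, s0 \notin T & first_hit T (q ord0) q].
Proof.
rewrite /first_hit fcons0 maxS fconsS eqxx /=.
case: (s0 == s) => //=.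
case: (q ord_max \in T) => /=; last by rewrite !andbF.
apply/forallP/andP.
  move=> H; split; first by have := H ord0; rewrite widen0 fcons0.
  by apply/forallP => j; have := H (lift ord0 j); rewrite widenS fconsS.
case=> H0 /forallP H i; case: (unliftP ord0 i) => [j ->|->].
  by rewrite widenS fconsS.
by rewrite widen0 fcons0.
Qed.

Lemma path_prob_cons n s0 (q : {ffun 'I_n.+1 -> S}) :
  path_prob P sigma (fcons s0 q) = P s0 (sigma s0) (q ord0) * path_prob P sigma q.
Proof.
rewrite /path_prob big_ord_recl widen0 fcons0 fconsS; congr (_ * _).
by apply: eq_bigr => i _; rewrite widenS !fconsS.
Qed.

Lemma path_rew_cons n s0 (q : {ffun 'I_n.+1 -> S}) :
  path_rew rew (fcons s0 q) = rew s0 + path_rew rew q.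
Proof.
rewrite /path_rew big_ord_recl widen0 fcons0; congr (_ + _).
by apply: eq_bigr => i _; rewrite widenS !fconsS.
Qed.

Lemma collapse n (G : S -> {ffun 'I_n.+1 -> S} -> R) :
  \sum_(q : {ffun 'I_n.+1 -> S} | first_hit T (q ord0) q) G (q ord0) q
  = \sum_s' \sum_(q : {ffun 'I_n.+1 -> S} | first_hit T s' q) G s' q.
Proof.
rewrite big_mkcond (eq_bigr _ (fun s' _ => big_mkcond _ _)) /= exchange_big /=.
apply: eq_bigr => q _.
rewrite (bigD1 (q ord0)) //= big1 ?addr0 // => s' ne.
case H: (first_hit T s' q) => //.
by move: H => /and3P [/eqP E _ _]; rewrite E eqxx in ne.
Qed.

Definition hp n s := \sum_(p : {ffun 'I_n.+1 -> S} | first_hit T s p) path_prob P sigma p.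
Definition gp n s := \sum_(p : {ffun 'I_n.+1 -> S} | first_hit T s p)
   (path_prob P sigma p * path_rew rew p).

Lemma gp0 s : gp 0 s = 0.
Proof. by apply: big1 => p _; rewrite /path_rew big_ord0 mulr0. Qed.

Lemma hp0 s : hp 0 s = (s \in T)%:R.
Proof.
rewrite /hp.
have E : forall p : {ffun 'I_1 -> S}, first_hit T s p = (p == [ffun => s]) && (s \in T).
  move=> p; rewrite /first_hit.
  have -> : (ord_max : 'I_1) = ord0 by apply: val_inj.
  have -> : [forall i : 'I_0, p (widen_ord (leqnSn 0) i) \notin T] = true.
    by apply/forallP => -[].
  rewrite andbT.
  case E: (p ord0 == s).
    have -> : p == [ffun => s].
      by apply/eqP/ffunP => i; rewrite ffunE (ord1 i); apply/eqP.
    by move/eqP: E => ->.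
  case: eqP => // Ep; by rewrite Ep ffunE eqxx in E.
rewrite (eq_bigl _ _ E).
case: (s \in T); last by rewrite big1 // => p; rewrite andbF.
rewrite (big_pred1 [ffun => s]) /path_prob ?big_ord0 // => p.
by rewrite andbT.
Qed.

Lemma hpS n s : hp n.+1 s =
  if s \in T then 0 else \sum_s' P s (sigma s) s' * hp n s'.
Proof.
rewrite /hp big_mkcond sum_paths (bigD1 s) //= [X in _ + X]big1 ?addr0; last first.
  by move=> s0 ne; apply: big1 => q _; rewrite first_hit_cons (negbTE ne).
under eq_bigr do rewrite first_hit_cons eqxx /=.
case: (s \in T) => /=; first by rewrite big1.
rewrite -big_mkcond /=.
under eq_bigr do rewrite path_prob_cons.
rewrite (collapse (fun s' q => P s (sigma s) s' * path_prob P sigma q)).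
by apply: eq_bigr => s' _; rewrite big_distrr.
Qed.

Lemma gpS n s : gp n.+1 s =
  if s \in T then 0 else \sum_s' P s (sigma s) s' * (rew s * hp n s' + gp n s').
Proof.
rewrite /gp big_mkcond sum_paths (bigD1 s) //= [X in _ + X]big1 ?addr0; last first.
  by move=> s0 ne; apply: big1 => q _; rewrite first_hit_cons (negbTE ne).
under eq_bigr do rewrite first_hit_cons eqxx /=.
case: (s \in T) => /=; first by rewrite big1.
rewrite -big_mkcond /=.
under eq_bigr do rewrite path_prob_cons path_rew_cons.
rewrite (collapse (fun s' q => P s (sigma s) s' * path_prob P sigma q * (rew s + path_rew rew q))).
apply: eq_bigr => s' _; rewrite /hp /gp big_distrr /= mulrDr !big_distrr -big_split /=.
apply: eq_bigr => q _; rewrite mulrDr; congr (_ + _); rewrite mulrA; first by rewrite (mulrC (_ * _) (rew s)) mulrA [_ * rew s]mulrC.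
done.
Qed.

End Paths.

Section Main.
Variables (R : realType) (S Act : finType) (P : S -> Act -> S -> R).
Variables (T : {set S}) (rew : S -> R) (sigma : {ffun S -> Act}).
Variables (F : pred S) (xf : S -> R) (rk : S -> nat).
Hypothesis Pge0 : forall s a s', 0 <= P s a s'.
Hypothesis Psum : forall s, \sum_s' P s (sigma s) s' = 1.
Hypothesis rew0 : forall s, 0 <= rew s.
Hypothesis xf0 : forall s, 0 <= xf s.
Hypothesis Fclosed : forall s s', F s -> s \notin T -> 0 < P s (sigma s) s' -> F s'.
Hypothesis Fdec : forall s, F s -> s \notin T ->
  rew s + \sum_s' P s (sigma s) s' * xf s' <= xf s.
Hypothesis Fprog : forall s, F s -> s \notin T ->
  exists2 s', 0 < P s (sigma s) s' & (rk s' < rk s)%N.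

Let h := hp P T sigma.
Let g := gp P T rew sigma.

Lemma h_ge0 n s : 0 <= h n s.
Proof. by apply: sumr_ge0 => p _; apply: prodr_ge0 => i _. Qed.

Lemma g_ge0 n s : 0 <= g n s.
Proof.
apply: sumr_ge0 => p _; apply: mulr_ge0; first by apply: prodr_ge0 => i _.
by apply: sumr_ge0 => i _.
Qed.

Lemma hsum_le1 N s : \sum_(0 <= n < N) h n s <= 1.
Proof.
elim: N s => [|N IH] s; first by rewrite big_geq.
rewrite big_nat_recl // /h hp0; under eq_bigr do rewrite hpS.
case: (s \in T) => /=; first by rewrite big1 ?addr0.
rewrite add0r exchange_big /= -(Psum s); apply: ler_sum => s' _.
by rewrite -mulr_sumr ler_piMr.
Qed.

Lemma gsum_le N s : F s -> \sum_(0 <= n < N) g n s <= xf s.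
Proof.
elim: N s => [|N IH] s Fs; first by rewrite big_geq.
rewrite big_nat_recl // /g gp0 add0r; under eq_bigr do rewrite gpS.
case sT: (s \in T) => /=; first by rewrite big1.
rewrite exchange_big /=.
apply: le_trans (Fdec Fs (negbT sT)).
rewrite -[in X in _ <= X](mulr1 (rew s)) -[in X in _ <= X](Psum s) mulr_sumr -big_split /=.
apply: ler_sum => s' _.
rewrite -mulr_sumr big_split /= -mulr_sumr.
case: (eqVneq (P s (sigma s) s') 0) => [->|Pn0].
  by rewrite !(mul0r, mulr0, addr0).
have Pp : 0 < P s (sigma s) s' by rewrite lt0r Pn0 Pge0.
rewrite [rew s * P _ _ _]mulrC -mulrDr ler_wpM2l //.
apply: lerD; first exact: ler_piMr (hsum_le1 _ _).
exact: IH (Fclosed Fs (negbT sT) Pp).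
Qed.

Definition qq N s := 1 - \sum_(0 <= n < N) h n s.

Lemma qq0 s : qq 0 s = 1.
Proof. by rewrite /qq big_geq // subr0. Qed.

Lemma qq_ge0 N s : 0 <= qq N s.
Proof. by rewrite /qq subr_ge0 hsum_le1. Qed.

Lemma qq_le1 N s : qq N s <= 1.
Proof.
have : 0 <= \sum_(0 <= n < N) h n s by apply: sumr_ge0 => n _; exact: h_ge0.
rewrite /qq; lra.
Qed.

Lemma qqS N s : qq N.+1 s = if s \in T then 0 else \sum_s' P s (sigma s) s' * qq N s'.
Proof.
rewrite /qq big_nat_recl // /h hp0; under eq_bigr do rewrite hpS.
case: (s \in T) => /=; first by rewrite big1 ?addr0 ?subrr.
rewrite add0r exchange_big /= -[in LHS](Psum s) -sumrB.
by apply: eq_bigr => s' _; rewrite mulrBr mulr1 mulr_sumr.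
Qed.

Lemma qq_mono N M s : (N <= M)%N -> qq M s <= qq N s.
Proof.
move=> NM; rewrite /qq (big_cat_nat (leq0n N) NM) /= lerD2l lerN2 lerDl.
by apply: sumr_ge0 => n _; exact: h_ge0.
Qed.

Lemma qq_lt1 k s : F s -> rk s = k -> qq k.+1 s < 1.
Proof.
elim/ltn_ind: k s => k IH s Fs Hk.
rewrite qqS; case sT: (s \in T) => /=; first by rewrite ltr01.
have [s' Pp lt] := Fprog Fs (negbT sT).
have Fs' := Fclosed Fs (negbT sT) Pp.
have q1 : qq k s' < 1.
  apply: le_lt_trans (qq_mono _ _) (IH _ _ s' Fs' erefl); first by rewrite -Hk.
  by rewrite -Hk.
rewrite -subr_gt0 -[X in X - _](Psum s) -sumrB (bigD1 s') //=.
have r0 : 0 <= \sum_(i | i != s') (P s (sigma s) i - P s (sigma s) i * qq k i).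
  apply: sumr_ge0 => i _; rewrite subr_ge0; exact: ler_piMr (qq_le1 _ _).
have : 0 < P s (sigma s) s' - P s (sigma s) s' * qq k s' by nra.
lra.
Qed.

Let M := (\max_s rk s).+1.
Let c := \big[Order.max/0]_(s | F s) qq M s.

Lemma c_ge0 : 0 <= c.
Proof.
rewrite /c; elim/big_ind: _ => // [x y ? ?|i _]; last exact: qq_ge0.
by rewrite /Order.max; case: ifP.
Qed.

Lemma c_lt1 : c < 1.
Proof.
apply: bigmax_lt => [|s Fs]; first exact: ltr01.
apply: le_lt_trans (qq_mono _ _) (qq_lt1 Fs erefl).
by rewrite /M ltnS leq_bigmax.
Qed.

Lemma qq_c s : F s -> qq M s <= c.
Proof. by move=> Fs; rewrite /c; apply: le_bigmax_cond. Qed.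

Lemma qq_mult N s : F s -> qq (N + M) s <= qq N s * c.
Proof.
elim: N s => [|N IH] s Fs; first by rewrite add0n qq0 mul1r qq_c.
rewrite addSn !qqS; case sT: (s \in T) => /=; first by rewrite mul0r.
rewrite mulr_suml; apply: ler_sum => s' _.
case: (eqVneq (P s (sigma s) s') 0) => [->|Pn0]; first by rewrite !mul0r.
have Pp : 0 < P s (sigma s) s' by rewrite lt0r Pn0 Pge0.
by rewrite -mulrA ler_wpM2l // IH // (Fclosed Fs (negbT sT) Pp).
Qed.

Lemma qq_pow k s : F s -> qq (k * M) s <= c ^+ k.
Proof.
elim: k s => [|k IH] s Fs; first by rewrite mul0n qq0 expr0.
rewrite mulSnr; apply: le_trans (qq_mult _ Fs) _.
by rewrite exprSr ler_wpM2r ?c_ge0 ?IH.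
Qed.

Lemma reach_close s : F s -> forall e : R, 0 < e ->
  exists N, 1 - e <= \sum_(0 <= n < N) h n s.
Proof.
move=> Fs e e0.
have cn : `|c| < 1 by rewrite ger0_norm ?c_ge0 ?c_lt1.
have := cvgr0_norm_lt _ (cvg_expr cn) _ e0.
case=> N0 _ /(_ N0 (leqnn N0)) /= HN.
exists (N0 * M)%N.
have := qq_pow N0 Fs; rewrite /qq.
have := ler_norm (c ^+ N0).
lra.
Qed.

Lemma reach_ge1 s : F s -> (reach_prob P T sigma s < 1)%E = false.
Proof.
move=> Fs; apply/negbTE; rewrite -leNgt.
apply/lee_addgt0Pr => e e0.
have [N HN] := reach_close Fs e0.
apply: (@le_trans _ _ ((\sum_(0 <= n < N) h n s) + e)%:E).
  by rewrite lee_fin; lra.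
rewrite EFinD leeD2r // -sumEFin /reach_prob.
apply: (nneseries_lim_ge N) => n _ _; rewrite lee_fin; exact: h_ge0.
Qed.

Lemma exp_le s : F s -> (exp_rew P T rew sigma s <= (xf s)%:E)%E.
Proof.
move=> Fs; rewrite /exp_rew reach_ge1 //.
apply: lime_le; first by apply: is_cvg_nneseries => n _ _; rewrite lee_fin; exact: g_ge0.
by apply: nearW => N; rewrite sumEFin lee_fin; exact: gsum_le.
Qed.

End Main.

Lemma bigmin_some (I : finType) (Q : pred I) (f : I -> natinf) j :
  \big[ninf_min/None]_(i | Q i) f i = Some j -> exists i, Q i /\ f i = Some j.
Proof.
move=> E.
suff : (\big[ninf_min/None]_(i | Q i) f i = None) \/
  exists i, Q i /\ f i = \big[ninf_min/None]_(i | Q i) f i.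
  by rewrite E => -[//|].
elim/big_ind: _ => [|u v Hu Hv|i Qi]; [by left | | by right; exists i].
case: Hu => [->|[i [Qi <-]]]; first exact: Hv.
case: Hv => [->|[i' [Qi' <-]]].
  by right; exists i; split => //; case: (f i).
case E1: (f i) => [m|]; case E2: (f i') => [m'|] /=.
- by case: (leqP m m') => hm; right; [exists i | exists i']; rewrite ?E1 ?E2.
- by right; exists i; rewrite E1.
- by right; exists i'; rewrite E2.
- by left.
Qed.


Theorem proposition9 (R : realType) (S Act : finType)
  (P : S -> Act -> S -> R) (T : {set S}) (rew : S -> R)
  (x : S -> \bar R) (r : S -> natinf) :
  mdp_wf P ->
  (forall s : S, exists a : Act, enabled P s a) ->
  (forall s : S, 0 <= rew s) ->
  (forall s : S, (0 <= x s)%E) ->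
  (forall s : S, ninf_le (Dmin P T rew x r s) (r s)) ->
  (forall s : S, (Emin P T rew x s <= x s)%E) ->
  (forall s : S, (x s < +oo)%E -> r s <> None) ->
  forall s : S, (exp_rew_min P T rew s <= x s)%E.
Proof.
move=> [Pwf _] en rew0 x0 HD HE Hr s.
have [xinf|xfin] := eqVneq (x s) +oo%E; first by rewrite xinf leey.
pose Fp : pred S := fun s => (x s < +oo)%E.
pose xf := fun s => fine (x s).
pose rk := fun s => odflt 0%N (r s).
have Pge0 : forall s a s', 0 <= P s a s' by move=> s0 a s'; case/andP: (Pwf s0 a s').
have xE : forall s, Fp s -> x s = (xf s)%:E.
  by move=> s0 Fs0; rewrite /xf fineK // ge0_fin_numE.
have H : forall s0, exists a, enabled P s0 a && (Fp s0 && (s0 \notin T) ==>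
    dec_act P rew x s0 a && [exists s', post P s0 a s' && (rk s' < rk s0)%N]).
  move=> s0; case Hc: (Fp s0 && (s0 \notin T)); last first.
    by have [a Ha] := en s0; exists a; rewrite Ha.
  move/andP: Hc => [Fs0 sT0].
  have := Hr s0 Fs0; case Er: (r s0) => [k|] // _.
  have := HD s0; rewrite /Dmin (negbTE sT0) Er.
  case Eb: (\big[ninf_min/None]_(a | dec_act P rew x s0 a) _) => [j|] //= jk.
  have [a [Da Ea]] := bigmin_some Eb.
  have [s' [Ps' Es']] := bigmin_some Ea.
  exists a; rewrite (andP Da).1 Da /=; apply/existsP; exists s'.
  by rewrite Ps' /rk Es' Er.
have [f Hf] := boolp.choice H.
pose sigma := [ffun s0 => f s0].
have Hstrat : strategy P sigma.
  by apply/forallP => s0; rewrite ffunE; case/andP: (Hf s0).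
have Psum : forall s0, \sum_s' P s0 (sigma s0) s' = 1.
  by move=> s0; rewrite ffunE; case/andP: (Hf s0) => /eqP.
have Hdec : forall s0, Fp s0 -> s0 \notin T -> dec_act P rew x s0 (sigma s0)
     /\ exists2 s', 0 < P s0 (sigma s0) s' & (rk s' < rk s0)%N.
  move=> s0 Fs0 sT0; rewrite ffunE.
  case/andP: (Hf s0) => _; rewrite Fs0 sT0 /= => /andP [D /existsP [s' /andP [Ps' lt]]].
  by split => //; exists s'.
have Fclosed : forall s0 s', Fp s0 -> s0 \notin T -> 0 < P s0 (sigma s0) s' -> Fp s'.
  move=> s0 s' Fs0 sT0 Pp.
  have [/andP [_ D] _] := Hdec s0 Fs0 sT0.
  rewrite /Fp ltey; apply/negP => /eqP xs'.
  move: D; rewrite /post_sum (bigD1 s') /=; last exact: Pp.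
  rewrite xs' gt0_muley ?lte_fin // addye; last first.
    rewrite gt_eqF // (@lt_le_trans _ _ 0%E) ?ltNy0 //.
    by apply: sume_ge0 => i _; apply: mule_ge0; rewrite ?lee_fin.
  rewrite addey // leye_eq => /eqP E.
  by move: Fs0; rewrite /Fp E ltxx.
have Fdec : forall s0, Fp s0 -> s0 \notin T ->
    rew s0 + \sum_s' P s0 (sigma s0) s' * xf s' <= xf s0.
  move=> s0 Fs0 sT0.
  have [/andP [_ D] _] := Hdec s0 Fs0 sT0.
  move: D; rewrite (xE _ Fs0) /post_sum.
  rewrite (eq_bigr (fun s' => (P s0 (sigma s0) s' * xf s')%:E)); last first.
    by move=> s' Ps'; rewrite (xE s') ?(Fclosed s0 s').
  rewrite sumEFin -EFinD lee_fin; congr (_ + _ <= _).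
  rewrite [RHS](bigID (post P s0 (sigma s0))) /= [X in _ = _ + X]big1 ?addr0 //.
  move=> s' Hn; have -> : P s0 (sigma s0) s' = 0 by apply/eqP; rewrite eq_le Pge0 andbT leNgt.
  by rewrite mul0r.
have Fprog : forall s0, Fp s0 -> s0 \notin T ->
    exists2 s', 0 < P s0 (sigma s0) s' & (rk s' < rk s0)%N.
  by move=> s0 Fs0 sT0; case: (Hdec s0 Fs0 sT0).
have xf0 : forall s0, 0 <= xf s0 by move=> s0; apply: fine_ge0.
have Fs : Fp s by rewrite /Fp ltey.
apply: le_trans (bigmin_le_cond _ _ Hstrat) _.
rewrite (xE _ Fs).
exact: (exp_le Pge0 Psum rew0 xf0 Fclosed Fdec Fprog Fs).
Qed.
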